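(* Let $V$ be a real Hilbert space, $W\subset V$ a finite-dimensional subspace, and $\mathcal M\subset V$ a compact set. For $\sigma\ge0$ let $\mathcal M_\sigma=\{v\in V:\operatorname{dist}(v,\mathcal M)\le\sigma\}$, $$\delta_\sigma=\sup\{\|u-v\|: u,v\in\mathcal M_\sigma,\ u-v\in W^\perp\},\qquad \tilde\delta_\sigma=\sup\{\|u-v\|: u,v\in\mathcal M,\ \|P_Wu-P_Wv\|\le\sigma\}.$$ Then for every $\sigma>0$, $$\delta_\sigma-2\sigma\le\tilde\delta_{2\sigma}\le\delta_\sigma+2\sigma.$$
   Context: $P_W$ is the orthogonal projection onto $W$, $W^\perp$ its orthogonal complement, and $\operatorname{dist}(v,\mathcal M)=\inf_{u\in\mathcal M}\|v-u\|$. *)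

(* Defs.v *)
From HB Require Import structures.
From mathcomp Require Import all_boot all_order all_algebra.
From mathcomp Require Import all_classical all_reals all_analysis.
Set Implicit Arguments. Unset Strict Implicit. Unset Printing Implicit Defensive.
Import Order.TTheory GRing.Theory Num.Theory.
Import numFieldNormedType.Exports.
Local Open Scope classical_set_scope.
Local Open Scope ring_scope.

Section Hilbert.
Variables (R : realType) (V : completeNormedModType R).

(* ip is a (real) inner product inducing the norm of V; together with
   completeness of V this makes V a real Hilbert space. *)
Definition is_inner_product (ip : V -> V -> R) : Prop :=
  (forall u v, ip u v = ip v u) /\
  (forall (a : R) u v w, ip (a *: u + v) w = a * ip u w + ip v w) /\
  (forall v, ip v v = `|v| ^+ 2).

Definition finite_dim_subspace (W : set V) : Prop :=
  exists (n : nat) (b : 'I_n -> V),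
    W = [set v | exists c : 'I_n -> R, v = \sum_(i < n) c i *: b i].

Definition orth_compl (ip : V -> V -> R) (W : set V) : set V :=
  [set v | forall w, W w -> ip v w = 0].

Definition orth_proj (ip : V -> V -> R) (W : set V) (v : V) : V :=
  xget 0 [set p | W p /\ orth_compl ip W (v - p)].

Definition dist (M : set V) (v : V) : R := inf [set `|v - u| | u in M].

Definition thicken (M : set V) (sigma : R) : set V :=
  [set v | dist M v <= sigma].

Definition delta (ip : V -> V -> R) (W : set V) (M : set V) (sigma : R) : R :=
  sup [set r | exists u v, thicken M sigma u /\ thicken M sigma v /\
                 orth_compl ip W (u - v) /\ r = `|u - v|].

Definition delta_tilde (ip : V -> V -> R) (W : set V) (M : set V) (sigma : R) : R :=
  sup [set r | exists u v, M u /\ M v /\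
                 `|orth_proj ip W u - orth_proj ip W v| <= sigma /\ r = `|u - v|].
End Hilbert.

(* Main.v *)
Require Import Defs.
From HB Require Import structures.
From mathcomp Require Import all_boot all_order all_algebra.
From mathcomp Require Import all_classical all_reals all_analysis.
From mathcomp Require Import ring lra.
Import Order.TTheory GRing.Theory Num.Theory.
Import numFieldNormedType.Exports.
Local Open Scope classical_set_scope.
Local Open Scope ring_scope.

Section IP.
Variables (R : realType) (V : completeNormedModType R) (ip : V -> V -> R).
Hypothesis Hip : is_inner_product ip.

Lemma ipC u v : ip u v = ip v u. Proof. by case: Hip. Qed.
Lemma ip_lin a u v w : ip (a *: u + v) w = a * ip u w + ip v w.
Proof. by case: Hip => _ []. Qed.
Lemma ipvv v : ip v v = `|v| ^+ 2. Proof. by case: Hip => _ []. Qed.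
Lemma ip0l w : ip 0 w = 0.
Proof.
have := ip_lin 1 0 0 w; rewrite scale1r addr0 mul1r => h; lra.
Qed.
Lemma ipDl u v w : ip (u + v) w = ip u w + ip v w.
Proof. by rewrite -[u]scale1r ip_lin mul1r scale1r. Qed.
Lemma ipZl a u w : ip (a *: u) w = a * ip u w.
Proof. by rewrite -[a *: u]addr0 ip_lin ip0l addr0. Qed.
Lemma ipNl u w : ip (- u) w = - ip u w.
Proof. by rewrite -scaleN1r ipZl mulN1r. Qed.
Lemma ipBl u v w : ip (u - v) w = ip u w - ip v w.
Proof. by rewrite ipDl ipNl. Qed.
Lemma ip0r w : ip w 0 = 0. Proof. by rewrite ipC ip0l. Qed.
Lemma ipDr u v w : ip w (u + v) = ip w u + ip w v.
Proof. by rewrite ipC ipDl !(ipC w). Qed.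
Lemma ipZr a u w : ip w (a *: u) = a * ip w u.
Proof. by rewrite ipC ipZl ipC. Qed.
Lemma ipNr u w : ip w (- u) = - ip w u.
Proof. by rewrite ipC ipNl ipC. Qed.
Lemma ipBr u v w : ip w (u - v) = ip w u - ip w v.
Proof. by rewrite ipDr ipNr. Qed.
Lemma ip_eq0 v : ip v v = 0 -> v = 0.
Proof. by rewrite ipvv => /eqP; rewrite sqrf_eq0 normr_eq0 => /eqP. Qed.
Lemma norm_sqrD u v : `|u + v| ^+ 2 = `|u| ^+ 2 + 2 * ip u v + `|v| ^+ 2.
Proof. by rewrite -!ipvv ipDl !ipDr (ipC v u); ring. Qed.


Definition subsp (W : set V) := W 0 /\ forall a u v, W u -> W v -> W (a *: u + v).
Definition has_proj (W : set V) :=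
  forall v, exists p, W p /\ orth_compl ip W (v - p).

Lemma subspB W u v : subsp W -> W u -> W v -> W (u - v).
Proof.
move=> [_ HW] Wu Wv; have := HW (-1) v u Wv Wu.
by rewrite scaleN1r addrC.
Qed.

Lemma proj_spec W v : has_proj W ->
  W (orth_proj ip W v) /\ orth_compl ip W (v - orth_proj ip W v).
Proof. by move=> hp; apply: (xgetPex 0 (hp v)). Qed.

Lemma orthB W x y : orth_compl ip W x -> orth_compl ip W y ->
  orth_compl ip W (x - y).
Proof. by move=> hx hy w Ww; rewrite ipBl hx // hy // subr0. Qed.

Lemma proj_uniq W v p : subsp W -> has_proj W -> W p ->
  orth_compl ip W (v - p) -> orth_proj ip W v = p.
Proof.
move=> sW hp Wp op; have [Wq oq] := proj_spec W v hp.
set q := orth_proj ip W v in Wq oq *.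
have Wqp : W (q - p) by apply: subspB.
have h : ip (q - p) (q - p) = 0.
  have e1 : (v - p) - (v - q) = q - p by rewrite opprB addrC addrA subrK.
  by rewrite -{1}e1 ipBl (op _ Wqp) (oq _ Wqp) subr0.
by apply/eqP; rewrite -subr_eq0; apply/eqP/ip_eq0.
Qed.

Lemma proj_norm W v : has_proj W -> `|orth_proj ip W v| <= `|v|.
Proof.
move=> hp; have [Wq oq] := proj_spec W v hp.
set q := orth_proj ip W v in Wq oq *.
have e := norm_sqrD q (v - q).
rewrite addrC subrK ipC (oq _ Wq) mulr0 addr0 in e.
have h : `|q| ^+ 2 <= `|v| ^+ 2 by rewrite e lerDl sqr_ge0.
by rewrite -(ler_pXn2r (_ : 0 < 2)%N) ?nnegrE.
Qed.

Lemma proj_ext W z : subsp W -> has_proj W ->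
  has_proj [set v | exists w a, W w /\ v = w + a *: z].
Proof.
move=> sW hp v.
have [Wp op] := proj_spec W v hp; set p := orth_proj ip W v in Wp op.
have [Wq oq] := proj_spec W z hp; set q := orth_proj ip W z in Wq oq.
set e := z - q.
set c := ip (v - p) e / ip e e.
exists (p + c *: e); split.
  exists (p - c *: q), c; split.
    by rewrite -scaleNr addrC; apply: sW.2.
  by rewrite /e scalerBr addrCA addrC.
have o1 : forall w, W w -> ip (v - (p + c *: e)) w = 0.
  move=> w Ww; rewrite opprD addrA ipBl op // ipZl.
  by rewrite /e (oq w Ww) mulr0 subr0.
have o2 : ip (v - (p + c *: e)) e = 0.
  rewrite opprD addrA ipBl ipZl /c.
  have [ee0|ee0] := eqVneq (ip e e) 0.
    by rewrite ee0 mulr0 subr0 (ip_eq0 _ ee0) ip0r.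
  by rewrite divfK // subrr.
move=> s [w [a [Ww ->]]]; rewrite ipDr ipZr o1 // add0r.
have -> : z = e + q by rewrite /e subrK.
by rewrite ipDr o2 o1 // addr0 mulr0.
Qed.

Definition span {n} (b : 'I_n -> V) : set V :=
  [set v | exists c : 'I_n -> R, v = \sum_(i < n) c i *: b i].

Lemma span_subsp n (b : 'I_n -> V) : subsp (@span n b).
Proof.
split.
  by exists (fun _ => 0); rewrite big1 // => i _; rewrite scale0r.
move=> a u v [cu ->] [cv ->]; exists (fun i => a * cu i + cv i).
rewrite scaler_sumr -big_split /=; apply: eq_bigr => i _.
by rewrite scalerDl scalerA.
Qed.

Lemma spanS n (b : 'I_n.+1 -> V) :
  span b = [set v | exists w a, span (fun i => b (widen_ord (leqnSn n) i)) w
                                  /\ v = w + a *: b ord_max].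
Proof.
apply/seteqP; split => v.
  by move=> [c ->]; rewrite big_ord_recr /=; do 2 eexists; split; first by exists (fun i => c (widen_ord (leqnSn n) i)).
move=> [w [a [[c ->] ->]]].
exists (fun i => match unlift ord_max i with Some j => c j | None => a end).
rewrite big_ord_recr /= unlift_none; congr (_ + _); apply: eq_bigr => i _.
have -> : widen_ord (leqnSn n) i = lift ord_max i by apply/val_inj; rewrite /= /bump leqNgt ltn_ord.
by rewrite liftK.
Qed.

Lemma span_proj n (b : 'I_n -> V) : has_proj (span b).
Proof.
elim: n b => [|n IH] b.
  move=> v; exists 0; split; first by exists (fun _ => 0); rewrite big_ord0.
  by move=> w [c ->]; rewrite big_ord0 ip0r.
rewrite spanS; apply: proj_ext; [exact: span_subsp | exact: IH].
Qed.

End IP.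

Lemma L1 (V : zmodType) (a b c e : V) : (a - b) - (c - e) = (a - c) - (b - e).
Proof. by rewrite !opprD !opprK addrACA. Qed.
Lemma L2 (V : zmodType) (u v h : V) : (u - h) - (v + h) = (u - v) - (h + h).
Proof. by rewrite !opprD addrACA. Qed.

Section Dist.
Variables (R : realType) (V : completeNormedModType R).

Lemma dist_le (M : set V) u x : M x -> dist M u <= `|u - x|.
Proof.
move=> Mx; apply: ge_inf; last by exists x.
by exists 0 => _ [y _ <-].
Qed.

Lemma dist_att (M : set V) u : compact M -> M !=set0 ->
  exists2 c, M c & `|u - c| <= dist M u.
Proof.
move=> cM M0.
have cf : {within M, continuous (fun x => `|u - x|)}.
  apply: continuous_subspaceT => x.
  apply: (@continuous_comp _ _ _ (fun y => u - y) (@Num.norm _ V) x); last exact: norm_continuous.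
  apply: continuousB; first exact: cst_continuous.
  by move=> ?; apply: cvg_id.
have [c cM' Hc] := compact_EVT_min M0 cM cf.
exists c; first by rewrite inE in cM'.
apply: lb_le_inf; first by case: M0 => x Mx; exists `|u - x|, x.
by move=> _ [y My <-]; apply: Hc; rewrite inE.
Qed.
End Dist.

Theorem mainTheorem6 (R : realType) (V : completeNormedModType R)
  (ip : V -> V -> R) (W M : set V) :
  is_inner_product ip -> finite_dim_subspace W ->
  compact M -> M !=set0 ->
  forall sigma : R, 0 < sigma ->
    delta ip W M sigma - 2 * sigma <= delta_tilde ip W M (2 * sigma) /\
    delta_tilde ip W M (2 * sigma) <= delta ip W M sigma + 2 * sigma.
Proof.
move=> Hip [n [b ->]] cM M0 sigma s0.
rewrite -/(@span R V n b).
have hp := @span_proj _ _ _ Hip _ b.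
have sW := @span_subsp _ _ _ b.
set WW := @span R V n b in hp sW *.
set P := orth_proj ip WW.
have [K HK] : exists K, forall x, M x -> `|x| <= K.
  have [B [_ HB]] := compact_bounded cM.
  by exists (B + 1) => x Mx; apply: (HB (B + 1)) => //; rewrite ltrDl.
have th : forall u, thicken M sigma u -> exists2 u0, M u0 & `|u - u0| <= sigma.
  move=> u tu; have [c Mc hc] := @dist_att _ _ _ u cM M0.
  by exists c => //; apply: le_trans hc tu.
have nb : forall u u0 : V, `|u| <= `|u0| + `|u - u0|.
  by move=> u u0; have := ler_normD u0 (u - u0); rewrite [u0 + _]addrC subrK.
have [m0 Mm0] := M0.
set D := [set r | exists u v, thicken M sigma u /\ thicken M sigma v /\
                 orth_compl ip WW (u - v) /\ r = `|u - v|].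
set T := [set r | exists u v, M u /\ M v /\
                 `|P u - P v| <= 2 * sigma /\ r = `|u - v|].
have hD : has_ubound D.
  exists (2 * (K + sigma)) => _ [u [v [tu [tv [_ ->]]]]].
  have [u0 Mu0 hu] := th u tu; have [v0 Mv0 hv] := th v tv.
  have := ler_normB u v; have := nb u u0; have := nb v v0.
  have := HK _ Mu0; have := HK _ Mv0; lra.
have hT : has_ubound T.
  exists (2 * K) => _ [u [v [Mu [Mv [_ ->]]]]].
  have := ler_normB u v; have := HK _ Mu; have := HK _ Mv; lra.
have tm0 : thicken M sigma m0.
  by rewrite /thicken /=; apply: le_trans (@dist_le _ _ _ _ _ Mm0) _; rewrite subrr normr0 ltW.
have D0 : D !=set0.
  exists `|m0 - m0|, m0, m0; do 3 split => //.
  by move=> w _; rewrite subrr ip0l.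
have T0 : T !=set0.
  exists `|m0 - m0|, m0, m0; do 3 split => //.
  by rewrite subrr normr0 mulr_ge0 // ltW.
have sup1 : delta ip WW M sigma <= delta_tilde ip WW M (2 * sigma) + 2 * sigma.
  apply: ge_sup => // _ [u [v [tu [tv [ouv ->]]]]].
  have [u0 Mu0 hu] := th u tu; have [v0 Mv0 hv] := th v tv.
  have [Wu0 ou0] := @proj_spec _ _ _ WW u0 hp.
  have [Wv0 ov0] := @proj_spec _ _ _ WW v0 hp.
  set y := (u0 - v0) - (u - v).
  have hPy : P y = P u0 - P v0.
    apply: (@proj_uniq _ _ _ Hip) => //; first exact: subspB.
    have -> : y - (P u0 - P v0) = ((u0 - P u0) - (v0 - P v0)) - (u - v).
      by rewrite /y addrAC; congr (_ - _); exact: L1.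
    by apply: orthB => //; apply: orthB.
  have hd : `|P u0 - P v0| <= 2 * sigma.
    rewrite -hPy; apply: le_trans (@proj_norm _ _ _ Hip _ y hp) _.
    rewrite /y L1; apply: le_trans (ler_normB _ _) _.
    rewrite distrC (distrC v0); lra.
  have : `|u0 - v0| <= delta_tilde ip WW M (2 * sigma).
    by apply: ub_le_sup => //; exists u0, v0.
  have := ler_distD u0 u v; have := ler_distD v0 u0 v.
  rewrite (distrC v0); lra.
have sup2 : delta_tilde ip WW M (2 * sigma) <= delta ip WW M sigma + 2 * sigma.
  apply: ge_sup => // _ [u [v [Mu [Mv [hd ->]]]]].
  have [Wu ou] := @proj_spec _ _ _ WW u hp.
  have [Wv ov] := @proj_spec _ _ _ WW v hp.
  set d := P u - P v in hd *.
  set h := 2^-1 *: d.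
  have hh : `|h| <= sigma.
    rewrite /h normrZ ger0_norm; last by rewrite invr_ge0.
    lra.
  have hhd : h + h = d.
    by rewrite /h -scalerDl (_ : 2^-1 + 2^-1 = 1 :> R) ?scale1r //; lra.
  have e1 : (u - h) - (v + h) = (u - P u) - (v - P v).
    by rewrite L2 hhd /d L1.
  have : `|(u - h) - (v + h)| <= delta ip WW M sigma.
    apply: ub_le_sup => //; exists (u - h), (v + h); split; last split.
    - rewrite /thicken /=; apply: le_trans (@dist_le _ _ _ _ _ Mu) _.
      by rewrite addrAC subrr add0r normrN.
    - rewrite /thicken /=; apply: le_trans (@dist_le _ _ _ _ _ Mv) _.
      by rewrite addrAC subrr add0r.
    - by split => //; rewrite e1; apply: orthB.
  have e2 : u - v = ((u - h) - (v + h)) + d by rewrite L2 hhd subrK.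
  rewrite e2; have := ler_normD ((u - h) - (v + h)) d; lra.
split; lra.
Qed.
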